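(* Let $V=\bigoplus_{i=1}^n B_i$ be a near vector space over a commutative $F$ with finitely many blocks. Then each block $B_i$ (embedded as $0\oplus\cdots\oplus B_i\oplus\cdots\oplus 0$) and the quasi-kernel $Q(V)=\bigcup_{i=1}^n B_i$ are definable in $V$ by quantifier-free formulas of the language $\mathcal L_{\bar F nvs}=\{+,0,(\lambda)_{\lambda\in\bar F}\}$ (equivalently, by formulas of $\mathcal L_{Fnvs}$ that are quantifier free modulo the quantifier-free definable functions of $\bar F$).
   Context: A near vector space $(V,F)$: $(V,+)$ a group, $F$ a set of endomorphisms containing $0,1,-1$, with $F\setminus\{0\}$ a subgroup of $\mathrm{Aut}(V,+)$ acting fixed point freely ($\alpha x=\beta x\Rightarrow\alpha=\beta$ or $x=0$), such that the quasi-kernel $Q(V)=\{u:\forall\alpha,\beta\in F\,\exists\gamma\in F\ \alpha u+\beta u=\gamma u\}$ generates $V$. Commutative: $\alpha(\beta v)=\beta(\alpha v)$. The blocks of $V$ are the summands in André's decomposition of $V$ into maximal regular near vector subspaces (regular: any two nonzero quasi-kernel elements $u,v$ satisfy $u+\lambda v\in Q(V)$ for some $\lambda\neq0$), each nonzero element of $Q(V)$ lying in exactly one block. $\bar F$ is the set of formal finite sums $\alpha_1+_\cdot\cdots+_\cdot\alpha_n$ of elements of $F$ acting by $v\mapsto\alpha_1(v)+\cdots+\alpha_n(v)$. $\mathcal L_{Fnvs}=\{+,0,(\lambda)_{\lambda\in F}\}$ and $\mathcal L_{\bar Fnvs}=\{+,0,(\lambda)_{\lambda\in\bar F}\}$,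 with unary function symbols interpreted as the actions. *)

(* Defs.v *)
From Stdlib Require Import List.
Import ListNotations.
Set Implicit Arguments.

Section NVS.
Variables (V : Type) (add : V -> V -> V) (zero : V) (opp : V -> V).
Variable F : (V -> V) -> Prop.

Definition is_group : Prop :=
  (forall x y z, add x (add y z) = add (add x y) z) /\
  (forall x, add zero x = x) /\ (forall x, add x zero = x) /\
  (forall x, add (opp x) x = zero) /\ (forall x, add x (opp x) = zero).

Definition zero_map : V -> V := fun _ => zero.

Definition quasi_kernel (u : V) : Prop :=
  forall a b, F a -> F b -> exists c, F c /\ add (a u) (b u) = c u.

Inductive gen (S : V -> Prop) : V -> Prop :=
| gen_in : forall x, S x -> gen S x
| gen_zero : gen S zero
| gen_add : forall x y, gen S x -> gen S y -> gen S (add x y)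
| gen_opp : forall x, gen S x -> gen S (opp x).

Definition is_near_vector_space : Prop :=
  is_group /\
  (forall f, F f -> forall x y, f (add x y) = add (f x) (f y)) /\
  F zero_map /\ F (fun x => x) /\ F opp /\
  (forall f, F f -> f <> zero_map ->
     exists g, F g /\ g <> zero_map /\
       (forall x, g (f x) = x) /\ (forall x, f (g x) = x)) /\
  (forall f g, F f -> F g -> f <> zero_map -> g <> zero_map ->
     F (fun x => f (g x))) /\
  (forall a b x, F a -> F b -> a x = b x -> a = b \/ x = zero) /\
  (forall v, gen quasi_kernel v).

Definition F_commutative : Prop :=
  forall a b, F a -> F b -> forall v, a (b v) = b (a v).

(* Near vector subspace: F-invariant subgroup W such that (W, F|W) is a near
   vector space; the remaining axioms are inherited, and Q(W) = Q(V) ∩ W. *)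
Definition near_vector_subspace (W : V -> Prop) : Prop :=
  W zero /\ (forall x y, W x -> W y -> W (add x y)) /\
  (forall x, W x -> W (opp x)) /\
  (forall f x, F f -> W x -> W (f x)) /\
  (forall x, W x -> gen (fun u => W u /\ quasi_kernel u) x).

Definition regular (W : V -> Prop) : Prop :=
  forall u v, W u -> W v -> quasi_kernel u -> quasi_kernel v ->
    u <> zero -> v <> zero ->
    exists l, F l /\ l <> zero_map /\ quasi_kernel (add u (l v)).

Definition is_block (B : V -> Prop) : Prop :=
  near_vector_subspace B /\ regular B /\
  (forall W, near_vector_subspace W -> regular W ->
     (forall x, B x -> W x) -> forall x, W x -> B x).

Definition finitely_many_blocks : Prop :=
  exists Bs : list (V -> Prop),
    forall B, is_block B -> exists B', In B' Bs /\ forall x, B x <-> B' x.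

(* The language L_{\bar F nvs} = {+, 0, (λ)_{λ ∈ \bar F}}; an element of
   \bar F is a formal finite sum α1 +. ... +. αn of elements of F, given as a
   list [α1; ...; αn], acting by v ↦ α1 v + ... + αn v. *)
Inductive term : Type :=
| tvar : nat -> term
| tzero : term
| tadd : term -> term -> term
| tact : list (V -> V) -> term -> term.

Inductive qf_formula : Type :=
| ftrue : qf_formula
| ffalse : qf_formula
| feq : term -> term -> qf_formula
| fnot : qf_formula -> qf_formula
| fand : qf_formula -> qf_formula -> qf_formula
| f_or : qf_formula -> qf_formula -> qf_formula.

Fixpoint term_wf (t : term) : Prop :=
  match t with
  | tvar _ | tzero => True
  | tadd t1 t2 => term_wf t1 /\ term_wf t2
  | tact l t1 => (forall a, In a l -> F a) /\ term_wf t1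
  end.

Fixpoint formula_wf (p : qf_formula) : Prop :=
  match p with
  | ftrue | ffalse => True
  | feq t1 t2 => term_wf t1 /\ term_wf t2
  | fnot p1 => formula_wf p1
  | fand p1 p2 | f_or p1 p2 => formula_wf p1 /\ formula_wf p2
  end.

Definition fbar_act (l : list (V -> V)) (v : V) : V :=
  fold_right (fun a acc => add (a v) acc) zero l.

Fixpoint eval_term (e : nat -> V) (t : term) : V :=
  match t with
  | tvar n => e n
  | tzero => zero
  | tadd t1 t2 => add (eval_term e t1) (eval_term e t2)
  | tact l t1 => fbar_act l (eval_term e t1)
  end.

Fixpoint holds (e : nat -> V) (p : qf_formula) : Prop :=
  match p with
  | ftrue => True
  | ffalse => False
  | feq t1 t2 => eval_term e t1 = eval_term e t2
  | fnot p1 => ~ holds e p1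
  | fand p1 p2 => holds e p1 /\ holds e p2
  | f_or p1 p2 => holds e p1 \/ holds e p2
  end.

Definition env_cons (x : V) (e : nat -> V) : nat -> V :=
  fun n => match n with 0 => x | S k => e k end.

(* S is definable (with parameters from V) by a quantifier-free
   L_{\bar F nvs}-formula φ(x0; x1, x2, ...): x0 is the defined variable,
   the other variables are instantiated by parameters. *)
Definition qf_definable (S : V -> Prop) : Prop :=
  exists (phi : qf_formula) (params : nat -> V),
    formula_wf phi /\ forall x, S x <-> holds (env_cons x params) phi.

End NVS.

(* Main.v *)
Require Import Defs.
From Stdlib Require Import List Classical ClassicalEpsilon.
Import ListNotations.

Section Proof14.
Variables (V : Type) (add : V -> V -> V) (zero : V) (opp : V -> V).
Variable F : (V -> V) -> Prop.
Hypothesis HV : is_near_vector_space add zero opp F.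
Hypothesis Hcomm : F_commutative F.

Lemma L_grp : is_group add zero opp.
Proof. apply HV. Qed.
Lemma addA x y z : add x (add y z) = add (add x y) z.
Proof. apply L_grp. Qed.
Lemma add0l x : add zero x = x.
Proof. apply L_grp. Qed.
Lemma add0r x : add x zero = x.
Proof. apply L_grp. Qed.
Lemma addNl x : add (opp x) x = zero.
Proof. apply L_grp. Qed.
Lemma addNr x : add x (opp x) = zero.
Proof. apply L_grp. Qed.
Lemma L_endo f : F f -> forall x y, f (add x y) = add (f x) (f y).
Proof. destruct HV as [_ [H _]]. apply H. Qed.
Lemma L_F0 : F (zero_map zero).
Proof. destruct HV as [_ [_ [H _]]]. exact H. Qed.
Lemma L_F1 : F (fun x => x).
Proof. destruct HV as [_ [_ [_ [H _]]]]. exact H. Qed.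
Lemma L_Fopp : F opp.
Proof. destruct HV as [_ [_ [_ [_ [H _]]]]]. exact H. Qed.
Lemma L_fpf a b x : F a -> F b -> a x = b x -> a = b \/ x = zero.
Proof. destruct HV as [_ [_ [_ [_ [_ [_ [_ [H _]]]]]]]]. apply H. Qed.
Lemma L_gen v : gen add zero opp (quasi_kernel add F) v.
Proof. destruct HV as [_ [_ [_ [_ [_ [_ [_ [_ H]]]]]]]]. apply H. Qed.

Lemma cancel_l a x y : add a x = add a y -> x = y.
Proof.
  intro H. rewrite <- (add0l x), <- (add0l y), <- (addNl a), <- !addA, H. reflexivity.
Qed.
Lemma opp_unique a b : add a b = zero -> b = opp a.
Proof.
  intro H. apply (cancel_l a). rewrite H, addNr. reflexivity.
Qed.
Lemma oppK x : opp (opp x) = x.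
Proof. symmetry. apply opp_unique. apply addNl. Qed.
Lemma sub0 a b : add a (opp b) = zero -> a = b.
Proof. intro H. rewrite <- (add0r a), <- (addNl b), addA, H, add0l. reflexivity. Qed.
Lemma oppD x y : opp (add x y) = add (opp x) (opp y).
Proof. apply L_endo, L_Fopp. Qed.
Lemma oppD' x y : opp (add x y) = add (opp y) (opp x).
Proof.
  symmetry. apply opp_unique. rewrite <- addA, (addA y), addNr, add0l, addNr. reflexivity.
Qed.
Lemma addC x y : add x y = add y x.
Proof.
  rewrite <- (oppK x), <- (oppK y). rewrite <- (oppD' (opp y) (opp x)), oppD. reflexivity.
Qed.
Lemma add4 a b c d : add (add a b) (add c d) = add (add a c) (add b d).
Proof.
  rewrite <- !addA. f_equal. rewrite !addA. f_equal. apply addC.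
Qed.
Lemma endo0 f : F f -> f zero = zero.
Proof.
  intro Hf. apply (cancel_l (f zero)). rewrite <- L_endo by exact Hf. rewrite !add0r. reflexivity.
Qed.
Lemma endoN f x : F f -> f (opp x) = opp (f x).
Proof.
  intro Hf. apply opp_unique. rewrite <- L_endo by exact Hf. rewrite addNr. apply endo0, Hf.
Qed.
Lemma opp0 : opp zero = zero.
Proof. apply endo0, L_Fopp. Qed.

Definition Qk := quasi_kernel add F.
Definition Qs u := Qk u /\ u <> zero.
Definition K u x := forall a b c, F a -> F b -> F c ->
  add (a u) (b u) = c u -> add (a x) (b x) = c x.

Lemma Kzero u : K u zero.
Proof. intros a b c Ha Hb Hc _. rewrite (endo0 a), (endo0 b), (endo0 c) by assumption. apply add0l. Qed.
Lemma Kadd u x y : K u x -> K u y -> K u (add x y).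
Proof.
  intros H1 H2 a b c Ha Hb Hc E. rewrite (L_endo a), (L_endo b), (L_endo c) by assumption.
  rewrite add4, (H1 a b c), (H2 a b c) by assumption. reflexivity.
Qed.
Lemma Kopp u x : K u x -> K u (opp x).
Proof.
  intros H1 a b c Ha Hb Hc E. rewrite (endoN a), (endoN b), (endoN c) by assumption.
  rewrite <- oppD, (H1 a b c) by assumption. reflexivity.
Qed.
Lemma KF u x l : F l -> K u x -> K u (l x).
Proof.
  intros Hl H1 a b c Ha Hb Hc E.
  rewrite (Hcomm a l Ha Hl), (Hcomm b l Hb Hl), (Hcomm c l Hc Hl), <- L_endo by assumption.
  f_equal. apply (H1 a b c); assumption.
Qed.
Lemma Krefl u : K u u.
Proof. intros a b c _ _ _ E. exact E. Qed.
Lemma Ktrans u w x : K u w -> K w x -> K u x.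
Proof. intros H1 H2 a b c Ha Hb Hc E. apply H2; auto. Qed.
Lemma Qk0 : Qk zero.
Proof.
  intros a b Ha Hb. exists (zero_map zero). split. apply L_F0.
  rewrite (endo0 a), (endo0 b) by assumption. apply add0l.
Qed.
Lemma KQ u x : Qk u -> K u x -> Qk x.
Proof.
  intros Hu H a b Ha Hb. destruct (Hu a b Ha Hb) as [c [Hc E]].
  exists c. split; auto.
Qed.
Lemma Ksym u w : Qs u -> Qs w -> K u w -> K w u.
Proof.
  intros [Hu _] [_ Hw] H a b c Ha Hb Hc E.
  destruct (Hu a b Ha Hb) as [c' [Hc' E']].
  pose proof (H a b c' Ha Hb Hc' E') as E2. rewrite E in E2.
  destruct (L_fpf _ _ _ Hc Hc' E2) as [->|]; [exact E'|contradiction].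
Qed.

Definition g (a b c : V -> V) (v : V) := add (add (a v) (b v)) (opp (c v)).
Lemma g_add a b c x y : F a -> F b -> F c -> g a b c (add x y) = add (g a b c x) (g a b c y).
Proof.
  intros. unfold g. rewrite (L_endo a), (L_endo b), (L_endo c) by assumption. rewrite oppD, (add4 (add (a x) (b x)) (opp (c x))), (add4 (a x) (b x)). reflexivity.
Qed.
Lemma g_zero a b c : F a -> F b -> F c -> g a b c zero = zero.
Proof. intros. unfold g. rewrite (endo0 a), (endo0 b), (endo0 c) by assumption. rewrite add0l. apply addNr. Qed.
Lemma Kg u a b c v : F a -> F b -> F c -> K u v -> K u (g a b c v).
Proof.
  intros. unfold g. apply Kadd. apply Kadd; apply KF; auto. apply Kopp, KF; auto.
Qed.
Lemma g_cancel w a b c v : Qs w -> F a -> F b -> F c -> add (a w) (b w) <> c w ->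
  K w v -> g a b c v = zero -> v = zero.
Proof.
  intros [Hw _] Ha Hb Hc Hne Hv E. destruct (Hw a b Ha Hb) as [d [Hd Ed]].
  pose proof (Hv a b d Ha Hb Hd Ed) as Ev. unfold g in E. rewrite Ev in E.
  apply sub0 in E. destruct (L_fpf _ _ _ Hd Hc E) as [->|]; [contradiction|assumption].
Qed.

Definition sum (l : list V) := fold_right add zero l.
Lemma sum_map_hom (h : V -> V) l : (forall x y, h (add x y) = add (h x) (h y)) -> h zero = zero ->
  sum (map h l) = h (sum l).
Proof.
  intros H0 H1. induction l; simpl. auto. rewrite H0, IHl. reflexivity.
Qed.
Lemma sum_zero l : (forall v, In v l -> v = zero) -> sum l = zero.
Proof.
  induction l; simpl; intros H. auto. rewrite IHl, (H a) by auto. apply add0l.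
Qed.
Lemma K_sum u l : (forall v, In v l -> K u v) -> K u (sum l).
Proof.
  induction l; simpl; intros H. apply Kzero. apply Kadd; auto.
Qed.

Fixpoint pw (l : list V) : Prop :=
  match l with
  | [] => True
  | u :: l' => (forall w, In w l' -> ~ K u w /\ ~ K w u) /\ pw l'
  end.

Lemma notK_triple u w : ~ K u w -> exists a b c, F a /\ F b /\ F c /\
  add (a u) (b u) = c u /\ add (a w) (b w) <> c w.
Proof.
  intro Hn. apply NNPP; intro H; apply Hn; intros a b c Ha Hb Hc E.
  apply NNPP; intro H'; apply H. exists a, b, c; auto.
Qed.

Lemma indep : forall us, pw us -> (forall u, In u us -> Qs u) ->
  forall l : list (V * V), map fst l = us ->
  (forall p, In p l -> K (fst p) (snd p)) -> sum (map snd l) = zero ->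
  forall p, In p l -> snd p = zero.
Proof.
  induction us as [|u1 us IH]; intros Hpw HQ l Hl HK Hs p Hp.
  - destruct l; simpl in *; [contradiction|discriminate].
  - destruct l as [|[u v1] rest]; simpl in Hl; [discriminate|]. injection Hl as <- Hrest.
    destruct Hpw as [Hpw1 Hpw2].
    assert (Hr: forall p, In p rest -> snd p = zero).
    { intros [k vk] Hk. simpl.
      assert (Hkin: In k us) by (rewrite <- Hrest; apply (in_map fst) in Hk; exact Hk).
      destruct (Hpw1 k Hkin) as [Hn _].
      destruct (notK_triple _ _ Hn) as [a [b [c [Ha [Hb [Hc [E Hne]]]]]]].
      assert (Hgv1 : g a b c v1 = zero).
      { unfold g. pose proof (HK (u, v1) (or_introl eq_refl) a b c Ha Hb Hc E) as E1. simpl in E1. rewrite E1. apply addNr. }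
      assert (Hgs : g a b c (sum (map snd rest)) = zero).
      { simpl in Hs. rewrite <- (g_zero a b c Ha Hb Hc), <- Hs, g_add, Hgv1, add0l by assumption.
        reflexivity. }
      pose proof (IH Hpw2 (fun u' H => HQ u' (or_intror H))
        (map (fun q => (fst q, g a b c (snd q))) rest)) as IH'.
      apply (g_cancel k a b c vk (HQ k (or_intror Hkin)) Ha Hb Hc Hne
        (HK (k, vk) (or_intror Hk))).
      refine (IH' _ _ _ (k, g a b c vk) _).
      + rewrite map_map. exact Hrest.
      + intros q Hq. apply in_map_iff in Hq as [q' [<- Hq']]. simpl.
        apply Kg; auto. apply (HK q'). right; exact Hq'.
      + rewrite map_map. simpl. rewrite <- (map_map snd (g a b c)).
        rewrite sum_map_hom; auto. intros; apply g_add; auto. apply g_zero; auto.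
      + change (k, g a b c vk) with ((fun q : V * V => (fst q, g a b c (snd q))) (k, vk)).
        apply in_map. exact Hk. }
    destruct Hp as [<-|Hp]; [|apply Hr; exact Hp].
    simpl. simpl in Hs. rewrite sum_zero, add0r in Hs. exact Hs.
    intros v Hv. apply in_map_iff in Hv as [q [<- Hq]]. apply Hr, Hq.
Qed.

Lemma core p q l : Qs p -> Qs q -> F l -> l <> zero_map zero -> Qk (add p (l q)) -> K q p.
Proof.
  intros Hp Hq Hl Hl0 Hw. apply NNPP; intro Hnqp.
  assert (Hlq: l q <> zero).
  { intro E. destruct (L_fpf l (zero_map zero) q Hl L_F0 E) as [|]; [contradiction|].
    apply (proj2 Hq); assumption. }
  assert (KqL: K q (l q)) by (apply KF; [exact Hl|apply Krefl]).
  assert (Hpw: p = add (add p (l q)) (opp (l q))) by (rewrite <- addA, addNr, add0r; reflexivity).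
  destruct (classic (add p (l q) = zero)) as [Hw0|Hw0].
  - apply Hnqp. rewrite Hpw, Hw0, add0l. apply Kopp, KqL.
  - assert (Qw: Qs (add p (l q))) by (split; assumption).
    destruct (classic (K q (add p (l q)))) as [Kqw|nKqw].
    + apply Hnqp. rewrite Hpw. apply Kadd. exact Kqw. apply Kopp, KqL.
    + assert (nKwq: ~ K (add p (l q)) q) by (intro H; apply nKqw, Ksym; auto).
      assert (nKpq: ~K p q) by (intro H; apply Hnqp, Ksym; auto).
      destruct (classic (K p (add p (l q)))) as [Kpw|nKpw].
      * apply Hlq.
        apply (indep [add p (l q); q]) with (l := [(add p (l q), add p (opp (add p (l q)))); (q, l q)]) (p := (q, l q)).
        -- simpl. split; [|split; [intros w []|exact I]].
           intros w [<-|[]]. split; assumption.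
        -- intros u [<-|[<-|[]]]; assumption.
        -- reflexivity.
        -- intros pr [<-|[<-|[]]]; simpl.
           ++ apply Kadd. apply Ksym; auto. apply Kopp, Krefl.
           ++ exact KqL.
        -- simpl. rewrite add0r, oppD, addA, addNr, add0l, addNl. reflexivity.
        -- right; left; reflexivity.
      * assert (nKwp: ~ K (add p (l q)) p) by (intro H; apply nKpw, Ksym; auto).
        apply (proj2 Hp).
        apply (indep [add p (l q); p; q]) with (l := [(add p (l q), opp (add p (l q))); (p, p); (q, l q)]) (p := (p, p)).
        -- simpl. split; [|split; [|split; [intros w []|exact I]]].
           ++ intros w [<-|[<-|[]]]; split; assumption.
           ++ intros w [<-|[]]; split; assumption.
        -- intros u [<-|[<-|[<-|[]]]]; assumption.
        -- reflexivity.
        -- intros pr [<-|[<-|[<-|[]]]]; simpl.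
           ++ apply Kopp, Krefl.
           ++ apply Krefl.
           ++ exact KqL.
        -- simpl. rewrite add0r. apply addNl.
        -- right; left; reflexivity.
Qed.

Lemma K_nvs u : Qs u -> near_vector_subspace add zero opp F (K u).
Proof.
  intros Hu. split; [apply Kzero|]. split; [intros; apply Kadd; auto|].
  split; [intros; apply Kopp; auto|]. split; [intros; apply KF; auto|].
  intros x Hx. apply gen_in. split; auto. apply (KQ u); [apply Hu|exact Hx].
Qed.

Lemma K_reg u : Qs u -> regular add zero F (K u).
Proof.
  intros Hu v w Hv Hw Qv Qw nv nw. exists (fun x => x). split; [apply L_F1|]. split.
  - intro E. apply nv. exact (f_equal (fun h => h v) E).
  - apply (KQ u); [apply Hu|]. apply Kadd; auto.
Qed.

Lemma K_block u : Qs u -> is_block add zero opp F (K u).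
Proof.
  intros Hu. split; [apply K_nvs; auto|]. split; [apply K_reg; auto|].
  intros W HW HWr Hsub x Wx. destruct HW as [_ [_ [_ [_ Hg]]]].
  pose proof (Hg x Wx) as G; clear Wx.
  induction G as [q [Wq Qq]| | x y _ IH1 _ IH2 | x _ IH].
  - destruct (classic (q = zero)) as [->|nq]; [apply Kzero|].
    destruct (HWr q u Wq (Hsub u (Krefl u)) Qq (proj1 Hu) nq (proj2 Hu)) as [l [Hl [Hl0 Hql]]].
    apply (core q u l); auto. split; auto.

  - apply Kzero.
  - apply Kadd; auto.
  - apply Kopp; auto.
Qed.

Hypothesis Hfin : finitely_many_blocks add zero opp F.

Lemma reps : exists us, pw us /\ (forall u, In u us -> Qs u) /\
  forall q, Qs q -> exists u, In u us /\ K u q.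
Proof.
  destruct Hfin as [Bs HBs].
  assert (HL : forall L, exists us, pw us /\ (forall u, In u us -> Qs u) /\
    forall q, Qs q -> (exists B', In B' L /\ forall x, K q x <-> B' x) ->
    exists u, In u us /\ K u q).
  { induction L as [|B' L IH].
    - exists []. split; [exact I|]. split; [intros u []|]. intros q _ [B' [[] _]].
    - destruct IH as [us [H1 [H2 H3]]].
      destruct (classic (exists q, Qs q /\ (forall x, K q x <-> B' x) /\ ~ exists u, In u us /\ K u q))
        as [[q0 [Hq0 [HB Hn]]]|Hn].
      + exists (q0 :: us). split.
        * simpl. split; auto. intros w Hw. split.
          -- intro K0. apply Hn. exists w. split; auto. apply Ksym; auto.
          -- intro K1. apply Hn. exists w. split; auto.
        * split. intros u [<-|Hu]; auto.
          intros q Hq [B'' [[<-|HB''] Hx]].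
          -- exists q0. split; [left; auto|]. apply HB. apply Hx. apply Krefl.
          -- destruct (H3 q Hq (ex_intro _ B'' (conj HB'' Hx))) as [u [Hu Ku]].
             exists u; split; [right|]; auto.
      + exists us. split; auto. split; auto. intros q Hq [B'' [[<-|HB''] Hx]].
        * apply NNPP; intro Hnn. apply Hn. exists q. split; auto.
        * apply H3; eauto. }
  destruct (HL Bs) as [us [H1 [H2 H3]]]. exists us. split; auto. split; auto.
  intros q Hq. apply H3; auto. apply HBs, K_block, Hq.
Qed.

Lemma pw_in us u w : pw us -> In u us -> In w us -> u <> w -> ~ K u w.
Proof.
  induction us as [|a r IH]; simpl; intros Hpw Hu Hw Hne; [contradiction|].
  destruct Hpw as [H1 H2].
  destruct Hu as [<-|Hu]; destruct Hw as [<-|Hw].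
  - contradiction.
  - apply H1, Hw.
  - apply H1, Hu.
  - apply IH; auto.
Qed.

Lemma pw_nodup us : pw us -> NoDup us.
Proof.
  induction us as [|a r IH]; simpl; intros Hpw; constructor.
  - intro Ha. destruct Hpw as [H1 _]. apply (proj1 (H1 a Ha)), Krefl.
  - apply IH, Hpw.
Qed.

Definition delta (w0 q : V) (w : V) : V :=
  if excluded_middle_informative (w = w0) then q else zero.

Lemma delta_sum us w0 q : NoDup us -> In w0 us -> sum (map (delta w0 q) us) = q.
Proof.
  induction us as [|a r IH]; simpl; intros Hnd Hin; [contradiction|].
  apply NoDup_cons_iff in Hnd as [Hnr Hnd]. unfold delta at 1.
  destruct (excluded_middle_informative (a = w0)) as [->|Hne].
  - rewrite sum_zero, add0r; auto. intros v Hv. apply in_map_iff in Hv as [w [<- Hw]].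
    unfold delta. destruct (excluded_middle_informative (w = w0)) as [->|]; auto. contradiction.
  - destruct Hin as [->|Hin]; [contradiction|]. rewrite IH, add0l; auto.
Qed.

Lemma sum_map_add (f1 f2 : V -> V) us :
  sum (map (fun w => add (f1 w) (f2 w)) us) = add (sum (map f1 us)) (sum (map f2 us)).
Proof.
  induction us as [|a r IH]; simpl. symmetry; apply add0l. rewrite IH, add4. reflexivity.
Qed.

Lemma decomp us : NoDup us -> (forall q, Qs q -> exists u, In u us /\ K u q) ->
  forall x, exists f, (forall w, In w us -> K w (f w)) /\ x = sum (map f us).
Proof.
  intros Hnd Hcov x.
  assert (Z : exists f, (forall w, In w us -> K w (f w)) /\ zero = sum (map f us)).
  { exists (fun _ => zero). split. intros; apply Kzero. symmetry. apply sum_zero.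
    intros v Hv. apply in_map_iff in Hv as [w [<- _]]. reflexivity. }
  induction (L_gen x) as [q Qq | | x y _ [f1 [H1 E1]] _ [f2 [H2 E2]] | x _ [f [H E]]].
  - destruct (classic (q = zero)) as [->|nq]; [exact Z|].
    destruct (Hcov q (conj Qq nq)) as [u [Hu Kuq]].
    exists (delta u q). split.
    + intros w Hw. unfold delta. destruct (excluded_middle_informative (w = u)) as [->|]; auto.
      apply Kzero.
    + symmetry. apply delta_sum; auto.
  - exact Z.
  - exists (fun w => add (f1 w) (f2 w)). split.
    + intros; apply Kadd; auto.
    + rewrite sum_map_add, <- E1, <- E2. reflexivity.
  - exists (fun w => opp (f w)). split.
    + intros; apply Kopp; auto.
    + rewrite <- (map_map f opp), sum_map_hom, <- E. reflexivity. apply oppD. apply opp0.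
Qed.

Definition atom (a b c : V -> V) : qf_formula V := feq (tact [a; b] (@tvar V 0)) (tact [c] (@tvar V 0)).

Lemma holds_atom a b c x e :
  holds add zero (env_cons x e) (atom a b c) <-> add (a x) (b x) = c x.
Proof. simpl. unfold fbar_act. simpl. rewrite !add0r. tauto. Qed.

Lemma wf_atom a b c : F a -> F b -> F c -> formula_wf F (atom a b c).
Proof.
  intros. simpl. split; split; auto.
  - intros d [<-|[<-|[]]]; auto.
  - intros d [<-|[]]; auto.
Qed.

Lemma formula_K u L : exists phi, formula_wf F phi /\ forall e x,
  (K u x -> holds add zero (env_cons x e) phi) /\
  (holds add zero (env_cons x e) phi -> forall w, In w L -> ~ K u w ->
     exists a b c, F a /\ F b /\ F c /\ add (a u) (b u) = c u /\ add (a w) (b w) <> c w /\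
       add (a x) (b x) = c x).
Proof.
  induction L as [|w L IH].
  - exists (@ftrue V). split; [exact I|]. intros e x. split; [intros; exact I|]. intros _ w [].
  - destruct IH as [phi [Hwf Hphi]].
    destruct (classic (K u w)) as [Kuw|nKuw].
    + exists phi. split; auto. intros e x. split; [apply Hphi|].
      intros Hh w' [<-|Hw'] Hn; [contradiction|]. apply (proj2 (Hphi e x)); auto.
    + destruct (notK_triple _ _ nKuw) as [a [b [c [Ha [Hb [Hc [E Hne]]]]]]].
      exists (fand (atom a b c) phi). split; [split; auto; apply wf_atom; auto|].
      intros e x. split.
      * intros Kx. split; [apply holds_atom; apply (Kx a b c); auto|apply Hphi; auto].
      * intros [Ha' Hh] w' [<-|Hw'] Hn.
        -- exists a, b, c. repeat split; auto. apply holds_atom in Ha'. exact Ha'.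
        -- apply (proj2 (Hphi e x)); auto.
Qed.

Lemma K_def us u : pw us -> (forall u, In u us -> Qs u) ->
  (forall q, Qs q -> exists u, In u us /\ K u q) -> In u us ->
  exists phi, formula_wf F phi /\ forall e x, K u x <-> holds add zero (env_cons x e) phi.
Proof.
  intros Hpw HQ Hcov Hu.
  destruct (formula_K u us) as [phi [Hwf Hphi]]. exists phi. split; auto.
  intros e x. split; [apply Hphi|]. intros Hh.
  destruct (decomp us (pw_nodup us Hpw) Hcov x) as [f [Hf E]].
  assert (Hz : forall w, In w us -> w <> u -> f w = zero).
  { intros w Hw Hne.
    assert (nK : ~ K u w) by (apply (pw_in us); auto).
    destruct (proj2 (Hphi e x) Hh w Hw nK) as [a [b [c [Ha [Hb [Hc [Eu [Hne' Ex]]]]]]]].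
    apply (g_cancel w a b c (f w) (HQ w Hw) Ha Hb Hc Hne' (Hf w Hw)).
    assert (Hgx : g a b c x = zero) by (unfold g; rewrite Ex; apply addNr).
    rewrite E, <- sum_map_hom in Hgx.
    2: intros; apply g_add; auto. 2: apply g_zero; auto.
    rewrite map_map in Hgx.
    refine (indep us Hpw HQ (map (fun w => (w, g a b c (f w))) us) _ _ _ (w, g a b c (f w)) _).
    - rewrite map_map. simpl. apply map_id.
    - intros p Hp. apply in_map_iff in Hp as [w' [<- Hw']]. simpl. apply Kg; auto.
    - rewrite map_map. exact Hgx.
    - change (w, g a b c (f w)) with ((fun w => (w, g a b c (f w))) w). apply in_map, Hw. }
  rewrite E. apply K_sum. intros v Hv. apply in_map_iff in Hv as [w [<- Hw]].
  destruct (classic (w = u)) as [->|Hne]; [apply Hf, Hw|]. rewrite Hz; auto. apply Kzero.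
Qed.

Lemma main_sec : (forall B, is_block add zero opp F B -> qf_definable add zero F B) /\
  qf_definable add zero F (quasi_kernel add F).
Proof.
  destruct reps as [us [Hpw [HQ Hcov]]].
  split.
  - intros B [Hnvs [Hreg Hmax]].
    pose proof Hnvs as [B0 [_ [_ [_ Hg]]]].
    destruct (classic (exists q, B q /\ Qs q)) as [[q [Bq Qq]]|Hn].
    + destruct (Hcov q Qq) as [u [Hu Kuq]].
      destruct (K_def us u Hpw HQ Hcov Hu) as [phi [Hwf Hphi]].
      exists phi, (fun _ => zero). split; auto. intro x. rewrite <- Hphi.
      transitivity (K q x).
      * split.
        -- intro Bx. pose proof (Hg x Bx) as G. clear Bx.
           induction G as [p [Bp Qp]| | x y _ IH1 _ IH2 | x _ IH].
           ++ destruct (classic (p = zero)) as [->|np]; [apply Kzero|].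
              destruct (Hreg p q Bp Bq Qp (proj1 Qq) np (proj2 Qq)) as [l [Hl [Hl0 Hql]]].
              apply (core p q l); auto. split; auto.
           ++ apply Kzero.
           ++ apply Kadd; auto.
           ++ apply Kopp; auto.
        -- intro Kx. apply (Hmax (K q) (K_nvs q Qq) (K_reg q Qq)); auto.
           intros y By. pose proof (Hg y By) as G. clear By.
           induction G as [p [Bp Qp]| | x' y' _ IH1 _ IH2 | x' _ IH].
           ++ destruct (classic (p = zero)) as [->|np]; [apply Kzero|].
              destruct (Hreg p q Bp Bq Qp (proj1 Qq) np (proj2 Qq)) as [l [Hl [Hl0 Hql]]].
              apply (core p q l); auto. split; auto.
           ++ apply Kzero.
           ++ apply Kadd; auto.
           ++ apply Kopp; auto.
      * split.
        -- intro H. apply (Ktrans u q x Kuq H).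
        -- intro H. apply (Ktrans q u x); auto. apply Ksym; auto.
    + exists (feq (@tvar V 0) (@tzero V)), (fun _ => zero). split; [split; exact I|].
      intro x. simpl. split.
      * intro Bx. pose proof (Hg x Bx) as G. clear Bx.
        induction G as [p [Bp Qp]| | x y _ IH1 _ IH2 | x _ IH].
        -- apply NNPP; intro np. apply Hn. exists p. split; auto. split; auto.
        -- reflexivity.
        -- rewrite IH1, IH2. apply add0l.
        -- rewrite IH. apply opp0.
      * intros ->. exact B0.
  - assert (HL : forall L, (forall u, In u L -> In u us) -> exists phi, formula_wf F phi /\
      forall x, holds add zero (env_cons x (fun _ => zero)) phi <-> exists u, In u L /\ K u x).
    { induction L as [|u L IH]; intros HLs.
      - exists (@ffalse V). split; [exact I|]. intro x. simpl. split; [intros []|intros [u [[] _]]].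
      - destruct IH as [phi [Hwf Hphi]]. intros; apply HLs; right; auto.
        destruct (K_def us u Hpw HQ Hcov (HLs u (or_introl eq_refl))) as [psi [Hwf' Hpsi]].
        exists (f_or psi phi). split; [split; auto|]. intro x. simpl. rewrite <- Hpsi, Hphi.
        split.
        + intros [H|[v [Hv H]]]; [exists u; auto|exists v; auto].
        + intros [v [[<-|Hv] H]]; [left; auto|right; exists v; auto]. }
    destruct (HL us (fun u H => H)) as [phi [Hwf Hphi]].
    exists (f_or (feq (@tvar V 0) (@tzero V)) phi), (fun _ => zero).
    split; [split; [split; exact I|exact Hwf]|].
    intro x. simpl. rewrite Hphi. split.
    + intro Qx. destruct (classic (x = zero)) as [->|nx]; [left; auto|right].
      destruct (Hcov x (conj Qx nx)) as [u [Hu Kux]]. exists u; auto.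
    + intros [->|[u [Hu Kux]]]. apply Qk0. apply (KQ u); auto. apply HQ, Hu.
Qed.

End Proof14.

Theorem mainTheorem14 (V : Type) (add : V -> V -> V) (zero : V) (opp : V -> V)
  (F : (V -> V) -> Prop)
  (HV : is_near_vector_space add zero opp F)
  (Hcomm : F_commutative F)
  (Hfin : finitely_many_blocks add zero opp F) :
  (forall B, is_block add zero opp F B -> qf_definable add zero F B) /\
  qf_definable add zero F (quasi_kernel add F).
Proof.
  exact (main_sec V add zero opp F HV Hcomm Hfin).
Qed.
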